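(* Let $\mathscr Q_n$ be a non-singular quadric in $\mathrm{PG}(n,q)$ of projective index $g$ with point-graph $\Gamma$, let $0\le s<g$, and let $\alpha_s$ be an $s$-dimensional subspace contained in $\mathscr Q_n$. Then every vertex of $\mathcal Y_s$ is adjacent in $\Gamma$ to $0$, $\frac12|\mathcal X_s|$ or $|\mathcal X_s|$ vertices of $\mathcal X_s$ if and only if $q=2$.
   Context: A non-singular quadric $\mathscr Q_n$ in $\mathrm{PG}(n,q)$ is the point set of a non-degenerate quadric; its projective index $g$ is the largest dimension of a projective subspace contained in $\mathscr Q_n$. The point-graph $\Gamma$ has vertex set the points of $\mathscr Q_n$, two distinct points adjacent iff the line joining them is contained in $\mathscr Q_n$. A point $X$ of $\mathscr Q_n$ has type (i) if $X\in\alpha_s$; type (ii) if $X\notin\alpha_s$ and the $(s+1)$-space $\langle\alpha_s,X\rangle$ is contained in $\mathscr Q_n$; type (iii) otherwise. $\mathcal X_s$ is the set of type (ii) points and $\mathcal Y_s$ the set of points of type (i) or (iii). *)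

(* Defs.v *)
From HB Require Import structures.
From mathcomp Require Import all_boot all_order all_algebra.
Set Implicit Arguments. Unset Strict Implicit. Unset Printing Implicit Defensive.
Import GRing.Theory.
Local Open Scope ring_scope.

(* PG(n,q) over a finite field F (q = #|F|) is modelled on the vector space
   F^(n+1) of row vectors 'rV[F]_(n.+1).  Projective subspaces are row spaces
   of matrices 'M[F]_(n.+1) (mxalgebra); a projective subspace of projective
   dimension d is a row space of rank d+1.  Projective points are represented
   canonically by the rank-1 matrices U with <<U>> = U. *)

Section Quadric.
Variables (F : finFieldType) (n : nat).

(* The quadratic form Q(x) = x A x^T (every quadratic form in n+1 variables
   is of this shape for some, e.g. upper triangular, matrix A). *)
Definition qform (A : 'M[F]_(n.+1)) (x : 'rV[F]_(n.+1)) : F :=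
  (x *m A *m x^T) 0 0.

Definition polar (A : 'M[F]_(n.+1)) (x y : 'rV[F]_(n.+1)) : F :=
  qform A (x + y) - qform A x - qform A y.

Definition nonsingular (A : 'M[F]_(n.+1)) : Prop :=
  forall x : 'rV[F]_(n.+1),
    qform A x = 0 -> (forall y, polar A x y = 0) -> x = 0.

Definition on_quadric (A : 'M[F]_(n.+1)) (U : 'M[F]_(n.+1)) : bool :=
  [forall v : 'rV[F]_(n.+1), (v <= U)%MS ==> (qform A v == 0)].

Definition proj_points : {set 'M[F]_(n.+1)} :=
  [set U : 'M[F]_(n.+1) | (\rank U == 1)%N && (<<U>>%MS == U)].

Definition quadric_points (A : 'M[F]_(n.+1)) : {set 'M[F]_(n.+1)} :=
  [set X in proj_points | on_quadric A X ].

Definition adjacent (A : 'M[F]_(n.+1)) (X Y : 'M[F]_(n.+1)) : bool :=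
  (X != Y) && on_quadric A (X + Y)%MS.

Definition proj_index (A : 'M[F]_(n.+1)) (g : nat) : Prop :=
  (exists U : 'M[F]_(n.+1), \rank U = g.+1 /\ on_quadric A U) /\
  (forall U : 'M[F]_(n.+1), on_quadric A U -> (\rank U <= g.+1)%N).

Definition Xs (A alpha : 'M[F]_(n.+1)) : {set 'M[F]_(n.+1)} :=
  [set X in quadric_points A |
     ~~ (X <= alpha)%MS && on_quadric A (alpha + X)%MS ].

Definition Ys (A alpha : 'M[F]_(n.+1)) : {set 'M[F]_(n.+1)} :=
  quadric_points A :\: Xs A alpha.

Definition nbrs_in_Xs (A alpha Y : 'M[F]_(n.+1)) : nat :=
  #|[set X in Xs A alpha | adjacent A Y X ]|.

End Quadric.

(* Main.v *)
Require Import Defs.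
From HB Require Import structures.
From mathcomp Require Import all_boot all_order all_algebra.
From mathcomp Require Import ring zify.
Set Implicit Arguments. Unset Strict Implicit. Unset Printing Implicit Defensive.
Import GRing.Theory.
Local Open Scope ring_scope.

Section Basics.
Variables (F : finFieldType) (n : nat) (A : 'M[F]_(n.+1)).
Local Notation V := 'rV[F]_(n.+1).
Local Notation Q := (qform A).
Local Notation B := (polar A).

Definition bf (x y : V) : F := (x *m A *m y^T) 0 0.

Lemma bfDl x y z : bf (x + y) z = bf x z + bf y z.
Proof. by rewrite /bf !mulmxDl mxE. Qed.
Lemma bfDr x y z : bf x (y + z) = bf x y + bf x z.
Proof. by rewrite /bf linearD /= mulmxDr mxE. Qed.
Lemma bfZl k x y : bf (k *: x) y = k * bf x y.
Proof. by rewrite /bf -!scalemxAl mxE. Qed.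
Lemma bfZr k x y : bf x (k *: y) = k * bf x y.
Proof. by rewrite /bf linearZ /= -scalemxAr mxE. Qed.

Lemma polarE x y : B x y = bf x y + bf y x.
Proof. rewrite /polar /qform -!/(bf _ _) !bfDl !bfDr; ring. Qed.
Lemma qD x y : Q (x + y) = Q x + Q y + B x y.
Proof. rewrite polarE /qform -!/(bf _ _) !bfDl !bfDr; ring. Qed.
Lemma qZ k x : Q (k *: x) = k ^+ 2 * Q x.
Proof. rewrite /qform -!/(bf _ _) bfZl bfZr; ring. Qed.
Lemma polarC x y : B x y = B y x.
Proof. rewrite !polarE; ring. Qed.
Lemma polarDl x y z : B (x + y) z = B x z + B y z.
Proof. rewrite !polarE !bfDl !bfDr; ring. Qed.
Lemma polarDr x y z : B x (y + z) = B x y + B x z.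
Proof. by rewrite polarC polarDl !(polarC x). Qed.
Lemma polarZl k x y : B (k *: x) y = k * B x y.
Proof. rewrite !polarE bfZl bfZr; ring. Qed.
Lemma polarZr k x y : B x (k *: y) = k * B x y.
Proof. by rewrite polarC polarZl polarC. Qed.
Lemma polarxx x : B x x = 2 * Q x.
Proof. rewrite polarE /qform -!/(bf _ _); ring. Qed.

Lemma on_quadricP (U : 'M[F]_(n.+1)) :
  reflect (forall v : V, (v <= U)%MS -> Q v = 0) (on_quadric A U).
Proof.
apply: (iffP forallP) => [H v vU|H v]; first by have /implyP/(_ vU)/eqP := H v.
by apply/implyP => /H ->.
Qed.

Lemma ts_polar (U : 'M[F]_(n.+1)) u v : on_quadric A U ->
  (u <= U)%MS -> (v <= U)%MS -> B u v = 0.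
Proof.
move/on_quadricP=> H uU vU.
have := qD u v; rewrite !H ?addmx_sub // => /eqP.
by rewrite !add0r eq_sym => /eqP.
Qed.

Lemma sub_rV (u v : V) : (u <= v)%MS -> exists k, u = k *: v.
Proof.
case/submxP=> D ->; exists (D 0 0).
by rewrite {1}[D]mx11_scalar mul_scalar_mx.
Qed.

End Basics.
Section Points.
Variables (F : finFieldType) (n : nat) (A : 'M[F]_(n.+1)).
Local Notation V := 'rV[F]_(n.+1).
Local Notation Q := (qform A).
Local Notation B := (polar A).

Definition pvec (X : 'M[F]_(n.+1)) : V :=
  odflt 0 [pick v : V | (v != 0) && (v <= X)%MS].

Lemma pvecP (X : 'M[F]_(n.+1)) : X \in proj_points F n ->
  [/\ pvec X != 0, (pvec X <= X)%MS & <<pvec X>>%MS = X].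
Proof.
rewrite inE => /andP[/eqP r1 /eqP gX].
have [v /andP[v0 vX]] : exists v : V, (v != 0) && (v <= X)%MS.
  have : X != 0 by rewrite -mxrank_eq0 r1.
  move=> X0; have : ~~ (X <= (0 : 'M[F]_(n.+1)))%MS by rewrite submx0.
  case/row_subPn=> i Hi; exists (row i X); rewrite row_sub andbT.
  by apply: contraNneq Hi => ->; rewrite sub0mx.
rewrite /pvec; case: pickP => [w /andP[w0 wX]|/(_ v)]; last by rewrite v0 vX.
split=> //=; rewrite -gX; apply: eq_genmx; apply/eqmxP.
by rewrite -(mxrank_leqif_eq wX).2 r1 rank_rV w0.
Qed.

Lemma genv_pt (v : V) : v != 0 -> <<v>>%MS \in proj_points F n.
Proof. by move=> v0; rewrite inE genmx_id eqxx andbT genmxE rank_rV v0. Qed.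

Lemma sub_genv (u v : V) : (u <= <<v>>)%MS = (u <= v)%MS.
Proof. by rewrite genmxE. Qed.

Lemma pvec_gen (v : V) : v != 0 -> exists2 k, k != 0 & pvec <<v>>%MS = k *: v.
Proof.
move=> v0; have [p0 ps _] := pvecP (genv_pt v0).
rewrite sub_genv in ps; have [k pk] := sub_rV ps; exists k => //.
by apply: contraNneq p0; rewrite pk => ->; rewrite scale0r.
Qed.

Lemma gen_scale (v : V) k : k != 0 -> <<k *: v>>%MS = <<v>>%MS.
Proof. by move=> k0; apply: eq_genmx; apply: eqmx_scale. Qed.

End Points.
Section Quad.
Variables (F : finFieldType) (n : nat) (A alpha : 'M[F]_(n.+1)).
Local Notation V := 'rV[F]_(n.+1).
Local Notation Q := (qform A).
Local Notation B := (polar A).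
Hypothesis qa : on_quadric A alpha.

Lemma on_quadric_add (U W : 'M[F]_(n.+1)) : on_quadric A U -> on_quadric A W ->
  (forall u w : V, (u <= U)%MS -> (w <= W)%MS -> B u w = 0) ->
  on_quadric A (U + W)%MS.
Proof.
move=> /on_quadricP qU /on_quadricP qW H; apply/on_quadricP => v.
case/sub_addsmxP=> [[D1 D2] /= ->].
have u1 : (D1 *m U <= U)%MS by apply: submxMl.
have w1 : (D2 *m W <= W)%MS by apply: submxMl.
by rewrite qD qU // qW // H // !addr0.
Qed.

Lemma pt_quad (v : V) : v != 0 -> Q v = 0 -> <<v>>%MS \in quadric_points A.
Proof.
move=> v0 qv; rewrite inE genv_pt //=; apply/on_quadricP => u.
by rewrite sub_genv => /sub_rV[k ->]; rewrite qZ qv mulr0.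
Qed.

Lemma pt_vec (X : 'M[F]_(n.+1)) (u : V) : X \in proj_points F n ->
  (u <= X)%MS -> exists k, u = k *: pvec X.
Proof.
move=> /pvecP[_ _ gX] uX; apply: sub_rV; by rewrite -sub_genv gX.
Qed.

Lemma qpt_vec (X : 'M[F]_(n.+1)) : X \in quadric_points A ->
  [/\ X \in proj_points F n, pvec X != 0, (pvec X <= X)%MS,
      <<pvec X>>%MS = X & Q (pvec X) = 0].
Proof.
rewrite inE => /andP[pX /on_quadricP qX]; have [p0 pS pg] := pvecP pX.
by split=> //; apply: qX.
Qed.

Lemma adjE (Y X : 'M[F]_(n.+1)) : Y \in quadric_points A -> X \in quadric_points A ->
  on_quadric A (Y + X)%MS = (B (pvec Y) (pvec X) == 0).
Proof.
move=> qY qX; have [pY _ sY _ _] := qpt_vec qY; have [pX _ sX _ _] := qpt_vec qX.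
apply/idP/eqP => [H|H].
  by apply: (ts_polar H); [apply: submx_trans sY (addsmxSl _ _)|
     apply: submx_trans sX (addsmxSr _ _)].
move: qY qX; rewrite !inE => /andP[_ oY] /andP[_ oX].
apply: on_quadric_add => // u w /(pt_vec pY)[k ->] /(pt_vec pX)[l ->].
by rewrite polarZl polarZr H !mulr0.
Qed.

Definition goodv (w : V) := [/\ w != 0, Q w = 0, ~~ (w <= alpha)%MS &
   forall a : V, (a <= alpha)%MS -> B a w = 0].

Lemma goodv_Xs w : goodv w -> <<w>>%MS \in Xs A alpha.
Proof.
case=> w0 qw nw pw; rewrite inE pt_quad //= genmxE nw /=.
apply: on_quadric_add => //; first by move: (pt_quad w0 qw); rewrite inE => /andP[].
move=> u v ua; rewrite sub_genv => /sub_rV[k ->].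
by rewrite polarZr pw // mulr0.
Qed.

Lemma Xs_goodv X : X \in Xs A alpha -> X \in quadric_points A /\ goodv (pvec X).
Proof.
rewrite inE => /and3P[qX nX oaX]; split=> //.
have [pX p0 pS pg pq] := qpt_vec qX; split=> //.
  by apply: contra nX => pa; rewrite -pg genmxE.
move=> a aa; apply: (ts_polar oaX); first by apply: submx_trans aa (addsmxSl _ _).
by apply: submx_trans pS (addsmxSr _ _).
Qed.

Lemma goodv_shift x a t : goodv x -> (a <= alpha)%MS -> goodv (x + t *: a).
Proof.
case=> x0 qx nx px aa.
have xa : ((x + t *: a)%R <= alpha)%MS -> (x <= alpha)%MS.
  move=> H; have -> : x = (x + t *: a) - t *: a by rewrite addrK.
  by rewrite addmx_sub // -scaleN1r scalemx_sub // scalemx_sub.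
have qa' := on_quadricP _ _ qa.
split.
- apply: contra nx => /eqP H; apply: xa; by rewrite H sub0mx.
- by rewrite qD qZ (qa' a aa) mulr0 qx polarZr polarC px // mulr0 !addr0.
- by apply: contra nx.
- move=> b ba; rewrite polarDr polarZr px // (ts_polar qa ba aa).
  by rewrite mulr0 addr0.
Qed.

End Quad.
Section Count.
Variables (F : finFieldType) (n : nat) (A alpha Y : 'M[F]_(n.+1)) (a : 'rV[F]_(n.+1)).
Local Notation V := 'rV[F]_(n.+1).
Local Notation Q := (qform A).
Local Notation B := (polar A).
Hypothesis qa : on_quadric A alpha.
Hypothesis qY : Y \in quadric_points A.
Hypothesis aa : (a <= alpha)%MS.
Hypothesis ya : B (pvec Y) a != 0.

Let C := [set X in Xs A alpha | adjacent A Y X].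

Lemma Y_notin_Xs : Y \notin Xs A alpha.
Proof.
apply/negP => /(Xs_goodv)[_ [_ _ _ H]].
by move: ya; rewrite polarC H // eqxx.
Qed.

Lemma memC X : (X \in C) = (X \in Xs A alpha) && (B (pvec Y) (pvec X) == 0).
Proof.
rewrite inE /adjacent; case XX: (X \in Xs A alpha) => //=.
have -> : Y != X by apply: contraNneq Y_notin_Xs => ->.
have [qX _] := Xs_goodv XX.
by rewrite adjE.
Qed.

Definition psi (p : 'M[F]_(n.+1) * F) : 'M[F]_(n.+1) := <<pvec p.1 + p.2 *: a>>%MS.

Lemma count_Xs : #|Xs A alpha| = (#|C| * #|F|)%N.
Proof.
set y := pvec Y.
have eqS : Xs A alpha = psi @: setX C setT.
  apply/setP => X; apply/idP/imsetP.
    move=> XX; have [qX gx] := Xs_goodv XX.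
    set x := pvec X in gx *.
    set c := B y x / B y a.
    have gw := goodv_shift qa (- c) gx aa.
    set w := (x + (- c) *: a) in gw *.
    have [w0 _ _ _] := gw.
    have [k k0 pk] := pvec_gen w0.
    have Bw : B y w = 0.
      rewrite polarDr polarZr /c mulNr divfK //; exact: subrr.
    exists (<<w>>%MS, k * c).
      by rewrite inE memC goodv_Xs //= pk polarZr Bw mulr0 eqxx inE.
    rewrite /psi /= pk.
    have -> : k *: w + (k * c) *: a = k *: x.
      rewrite /w scalerDr scalerA -addrA -scalerDl.
      have -> : k * - c + k * c = 0 by ring.
      by rewrite scale0r addr0.
    by rewrite gen_scale //; have [_ _ _ -> _] := qpt_vec qX.
  case=> [[Z t]] /setXP[ZC _] ->.
  rewrite memC in ZC; case/andP: ZC => ZX _.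
  have [_ gz] := Xs_goodv ZX.
  by apply: goodv_Xs => //; apply: goodv_shift.
rewrite eqS card_in_imset ?cardsX ?cardsT //.
move=> [Z t] [Z' t'] /setXP[ZC _] /setXP[ZC' _] /= E.
rewrite memC in ZC; case/andP: ZC => ZX /eqP yz.
rewrite memC in ZC'; case/andP: ZC' => ZX' /eqP yz'.
have [qZ [z0 _ _ _]] := Xs_goodv ZX.
have [qZ' [z0' _ _ _]] := Xs_goodv ZX'.
rewrite /psi /= in E.
set z := pvec Z in yz z0 E; set z' := pvec Z' in yz' z0' E.
have : ((z + t *: a)%R <= <<(z' + t' *: a)%R>>)%MS by rewrite -E sub_genv submx_refl.
rewrite sub_genv => /sub_rV[k Ek].
have tk : t = k * t'.
  have := congr1 (B y) Ek.
  rewrite polarZr !polarDr !polarZr yz yz' !add0r mulrA.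
  by move/(mulIf ya).
have zk : z = k *: z'.
  by move: Ek; rewrite scalerDr scalerA -tk => /addIr.
have k0 : k != 0 by apply: contraNneq z0 => k0; rewrite zk k0 scale0r.
have ZZ : Z = Z'.
  by have [_ _ _ <- _] := qpt_vec qZ; have [_ _ _ <- _] := qpt_vec qZ';
     rewrite -/z -/z' zk gen_scale.
have zz : z = z' by rewrite /z /z' ZZ.
have k1 : k = 1.
  apply/eqP; rewrite -subr_eq0; apply/eqP.
  have : (k - 1) *: z = 0 by rewrite scalerBl scale1r {1}zz -zk subrr.
  by move/eqP; rewrite scaler_eq0 (negbTE z0) orbF => /eqP.
by rewrite ZZ tk k1 mul1r.
Qed.

End Count.
Section Main.
Variables (F : finFieldType) (n : nat) (A alpha : 'M[F]_(n.+1)).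
Local Notation V := 'rV[F]_(n.+1).
Local Notation Q := (qform A).
Local Notation B := (polar A).

Lemma polarM x y : B x y = (x *m (A + A^T) *m y^T) 0 0.
Proof.
rewrite polarE /bf mulmxDr mulmxDl [in RHS]mxE; congr (_ + _).
have H : (y *m A *m x^T)^T = x *m A^T *m y^T by rewrite !trmx_mul trmxK mulmxA.
by rewrite -H [in RHS]mxE.
Qed.

Lemma on_quadric_sub (U W : 'M[F]_(n.+1)) : (U <= W)%MS -> on_quadric A W ->
  on_quadric A U.
Proof.
move=> sUW /on_quadricP H; apply/on_quadricP => v vU; apply: H.
exact: submx_trans vU sUW.
Qed.

Lemma polar0r x : B x 0 = 0.
Proof. by have := polarZr A 0 x 0; rewrite scale0r mul0r. Qed.

Lemma arith_aux (r1 r2 r3 k w ak au g s : nat) : (r3 + k = g.+1 -> r3 = r2 ->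
  r2 + r1 = s.+1 -> w + ak = s.+1 + k -> au <= r1 -> ak <= au -> s < g ->
  w <= s.+1 -> False)%N.
Proof. lia. Qed.

Lemma Xs_nonempty g s : proj_index A g -> (s < g)%N -> \rank alpha = s.+1 ->
  on_quadric A alpha -> exists X, X \in Xs A alpha.
Proof.
move=> [[U [rU qU]] _] sg ra qa.
set M := A + A^T.
set P := M *m alpha^T.
set R := M^T *m U^T.
set K := (U :&: kermx P)%MS.
set W := (alpha + K)%MS.
have perpP (w u : V) : w *m P = 0 -> (u <= alpha)%MS -> B w u = 0.
  move=> wP /submxP[D ->].
  by rewrite polarM trmx_mul -/M !mulmxA -(mulmxA w) -/P wP !mul0mx mxE.
have Rv (v : V) : (v <= U)%MS -> v *m R = 0.
  move=> vU.
  have -> : v *m R = (U *m M *m v^T)^T by rewrite !trmx_mul trmxK mulmxA.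
  have -> : U *m M *m v^T = 0; last by rewrite trmx0.
  apply/row_matrixP => i; rewrite !row_mul row0.
  apply/matrixP => j k; rewrite (ord1 j) (ord1 k) [RHS]mxE.
  rewrite -polarM; apply: (ts_polar qU) => //; exact: row_sub.
have RX m (X : 'M[F]_(m, n.+1)) : (X <= U)%MS -> X *m R = 0.
  move=> XU; apply/row_matrixP => i; rewrite row_mul row0; apply: Rv.
  exact: submx_trans (row_sub i X) XU.
have e1 := mxrank_mul_ker U P.
have e2 : \rank (U *m P) = \rank (alpha *m R).
  rewrite -mxrank_tr; congr (\rank _).
  by rewrite /P /R !trmx_mul trmxK mulmxA.
have e3 := mxrank_mul_ker alpha R.
have i4 : (\rank (alpha :&: U) <= \rank (alpha :&: kermx R))%N.
  apply: mxrankS; rewrite sub_capmx capmxSl /=; apply/sub_kermxP.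
  by apply: RX; apply: capmxSr.
have e5 := mxrank_sum_cap alpha K.
have i6 : (\rank (alpha :&: K) <= \rank (alpha :&: U))%N.
  apply: mxrankS; rewrite sub_capmx capmxSl /=.
  apply: submx_trans (capmxSr _ _) _; exact: capmxSl.
have qK : on_quadric A K by apply: on_quadric_sub qU; apply: capmxSl.
have qW : on_quadric A W.
  apply: on_quadric_add => // u w ua wK; rewrite polarC; apply: perpP => //.
  apply/sub_kermxP; apply: submx_trans wK _; exact: capmxSr.
have nW : ~~ (W <= alpha)%MS.
  move: e1 e5; rewrite -/K -/W rU => e1 e5.
  rewrite ra in e3 e5.
  apply/negP => /mxrankS; rewrite ra.
  exact: (arith_aux e1 e2 e3 e5 i4 i6 sg).
case/row_subPn: nW => i ni.
exists <<row i W>>%MS; apply: goodv_Xs => //; split => //.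
- by apply: contraNneq ni => ->; rewrite sub0mx.
- by move/on_quadricP: qW; apply; apply: row_sub.
- move=> b ba; apply: (ts_polar qW); last exact: row_sub.
  exact: submx_trans ba (addsmxSl _ _).
Qed.

End Main.
Lemma card_F_gt1 (F : finFieldType) : (1 < #|F|)%N.
Proof. by apply/card_gt1P; exists 0, 1; rewrite !inE eq_sym oner_neq0. Qed.

Lemma two_dir (F : finFieldType) (n : nat) (A alpha : 'M[F]_(n.+1)) :
  on_quadric A alpha -> #|F| = 2%N ->
  forall Y, Y \in Ys A alpha ->
     [\/ nbrs_in_Xs A alpha Y = 0%N,
         (2 * nbrs_in_Xs A alpha Y)%N = #|Xs A alpha|
       | nbrs_in_Xs A alpha Y = #|Xs A alpha| ].
Proof.
move=> qa F2 Y; rewrite inE => /andP[nY qY].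
have [pY y0 yY gY qy] := qpt_vec qY.
case oaY: (on_quadric A (alpha + Y)%MS).
  have Ya : (Y <= alpha)%MS.
    by apply: contraNT nY => nYa; rewrite inE qY nYa oaY.
  apply: Or33; rewrite /nbrs_in_Xs.
  suff -> : [set X in Xs A alpha | adjacent A Y X] = Xs A alpha by [].
  apply/setP => X.
  rewrite inE; case XX: (X \in Xs A alpha) => //=.
  rewrite /adjacent; have -> : Y != X by apply: contraNneq nY => ->.
  move: XX; rewrite inE => /and3P[_ _ oaX].
  by apply: on_quadric_sub oaX; apply: addsmxS.
have [a /andP[aa ya]] : exists a : 'rV[F]_(n.+1), (a <= alpha)%MS && (polar A (pvec Y) a != 0).
  apply/existsP; apply: contraFT oaY; rewrite negb_exists => /forallP H.
  apply: on_quadric_add => //; first by move: qY; rewrite inE => /andP[].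
  move=> u w ua /(pt_vec pY)[k ->].
  have := H u; rewrite ua /= negbK => /eqP hu.
  by rewrite polarZr polarC hu mulr0.
apply: Or32; rewrite /nbrs_in_Xs (count_Xs qa qY aa ya) F2.
by rewrite mulnC.
Qed.

Theorem lemma4p3 (F : finFieldType) (n : nat) (A : 'M[F]_(n.+1))
    (g s : nat) (alpha : 'M[F]_(n.+1)) :
  nonsingular A ->
  proj_index A g ->
  (s < g)%N ->
  \rank alpha = s.+1 ->
  on_quadric A alpha ->
  (forall Y, Y \in Ys A alpha ->
     [\/ nbrs_in_Xs A alpha Y = 0%N,
         (2 * nbrs_in_Xs A alpha Y)%N = #|Xs A alpha|
       | nbrs_in_Xs A alpha Y = #|Xs A alpha| ])
  <-> #|F| = 2%N.
Proof.
move=> ns pi sg ra qa; split; last exact: two_dir.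
move=> H.
have [a0 a0a a00] : exists2 a : 'rV[F]_(n.+1), (a <= alpha)%MS & a != 0.
  have : ~~ (alpha <= (0 : 'M[F]_(n.+1)))%MS by rewrite submx0 -mxrank_eq0 ra.
  case/row_subPn=> i Hi; exists (row i alpha); first exact: row_sub.
  by apply: contraNneq Hi => ->; rewrite sub0mx.
have qa0 : qform A a0 = 0 by move/on_quadricP: qa; apply.
have [z zd] : exists z, polar A a0 z != 0.
  apply/existsP; apply: contraNT a00; rewrite negb_exists => /forallP Hz.
  apply/eqP; apply: ns => // y; apply/eqP; have := Hz y; by rewrite negbK.
set d := polar A a0 z in zd.
set t := - qform A z / d.
set y := z + t *: a0.
have ay : polar A a0 y = d.
  by rewrite /y polarDr polarZr polarxx qa0 !mulr0 addr0.
have qy : qform A y = 0.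
  by rewrite /y qD qZ qa0 mulr0 addr0 polarZr polarC -/d /t divfK // subrr.
have y0 : y != 0 by apply: contraNneq zd => y0; rewrite -/d -ay y0 polar0r.
set Y := <<y>>%MS.
have qY : Y \in quadric_points A by apply: pt_quad.
have [k k0 pk] := pvec_gen y0.
have ya : polar A (pvec Y) a0 != 0 by rewrite pk polarZl polarC ay mulf_neq0.
have YY : Y \in Ys A alpha by rewrite inE qY (Y_notin_Xs a0a ya).
have cnt := count_Xs qa qY a0a ya.
have [X XX] := Xs_nonempty pi sg ra qa.
have pos : (0 < #|Xs A alpha|)%N by apply/card_gt0P; exists X.
have q1 := card_F_gt1 F.
rewrite /nbrs_in_Xs in H.
move: (H Y YY) pos q1; rewrite cnt.
set c := #|_|; set q := #|F|.
case=> E cpos q1'; have c0 : (0 < c)%N by move: cpos; rewrite muln_gt0 => /andP[].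
- by move: c0; rewrite E.
- by apply/eqP; rewrite -(eqn_pmul2l c0) -E mulnC.
- exfalso; have : (c * 1 < c * q)%N by rewrite ltn_pmul2l.
  by rewrite muln1 -E ltnn.
Qed.
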